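(* $\mathcal M_{\max}$ is a well-defined functor from $\mathbf{Ord}$ to $\mathbf{Ord}$: for every monotone $f:X\to Y$, $\mathcal M_{\max}(f)$ is a monotone map $(\mathcal M(X),\le_{\mathcal M(X)})\to(\mathcal M(Y),\le_{\mathcal M(Y)})$, $\mathcal M_{\max}(\mathrm{id}_X)=\mathrm{id}$, and $\mathcal M_{\max}(g\circ f)=\mathcal M_{\max}(g)\circ\mathcal M_{\max}(f)$ for monotone $f:X\to Y$, $g:Y\to Z$.
   Context: $\mathbf{Ord}$ is the category of partially ordered sets and monotone maps. For a poset $(X,\le_X)$, $\mathcal M(X)$ is the set of nonempty finite subsets of $X$ whose elements are pairwise incomparable, ordered by $S\le_{\mathcal M(X)}T$ iff every $x\in S$ has some $y\in T$ with $x\le_X y$. For $S\subseteq X$, $S^{\circ}$ denotes the set of maximal elements of $S$. The maximal functor is given by $\mathcal M_{\max}(X)=(\mathcal M(X),\le_{\mathcal M(X)})$ and $\mathcal M_{\max}(f)(S)=(f(S))^{\circ}$ for monotone $f:X\to Y$. *)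

(* Defs.v *)
From mathcomp Require Import all_boot all_order.
From mathcomp Require Import boolp classical_sets cardinality.
Set Implicit Arguments. Unset Strict Implicit. Unset Printing Implicit Defensive.
Import Order.POrderTheory.
Local Open Scope order_scope.

Definition antichain {d} {X : porderType d} (S : set X) : Prop :=
  forall x y, S x -> S y -> x <> y -> ~~ (x >=< y).

Definition inM {d} {X : porderType d} (S : set X) : Prop :=
  S <> set0 /\ finite_set S /\ antichain S.

Definition leM {d} {X : porderType d} (S T : set X) : Prop :=
  forall x, S x -> exists y, T y /\ x <= y.

Definition maxset {d} {X : porderType d} (S : set X) : set X :=
  fun x => S x /\ (forall y, S y -> x <= y -> y = x).

Definition Mmax {d1 d2} {X : porderType d1} {Y : porderType d2}
  (f : X -> Y) (S : set X) : set Y :=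
  maxset (image S f).

(* Main.v *)
Require Import Defs.
From mathcomp Require Import all_boot all_order.
From mathcomp Require Import boolp classical_sets cardinality.
Local Open Scope order_scope.
Import Order.POrderTheory.

Lemma exmax_seq {d} {X : porderType d} {s : seq X} {a : X} : a \in s ->
  exists b, b \in s /\ a <= b /\ forall y, y \in s -> b <= y -> y = b.
Proof.
elim: s a => [//|x s IH] a.
have Hx : (forall b, b \in s -> (forall y, y \in s -> b <= y -> y = b) ->
   exists c, c \in x :: s /\ b <= c /\ forall y, y \in x :: s -> c <= y -> y = c).
  move=> b bs bm.
  case: (pselect (b <= x)) => bx.
  - exists x; split; first by rewrite inE eqxx.
    split=> // y; rewrite inE => /orP[/eqP -> //|ys] xy.
    have yb := bm y ys (le_trans bx xy).
    by subst y; apply/eqP; rewrite eq_le xy bx.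
  - exists b; split; first by rewrite inE bs orbT.
    split=> // y; rewrite inE => /orP[/eqP ->|ys] xy; last exact: bm.
    by exfalso; apply: bx.
rewrite inE => /orP[/eqP ->|as_].
- case: (pselect (exists y, y \in s /\ x <= y)) => [[y [ys xy]]|nex].
  + have [b [bs [yb bm]]] := IH y ys.
    have [c [cs [bc cm]]] := Hx b bs bm.
    by exists c; split=> //; split=> //; apply: le_trans xy (le_trans yb bc).
  + exists x; split; first by rewrite inE eqxx.
    split=> // y; rewrite inE => /orP[/eqP -> //|ys] xy.
    by exfalso; apply: nex; exists y.
- have [b [bs [ab bm]]] := IH a as_.
  have [c [cs [bc cm]]] := Hx b bs bm.
  by exists c; split=> //; split=> //; apply: le_trans ab bc.
Qed.

Lemma exmax {d} {X : porderType d} {A : set X} {a : X} : finite_set A -> A a ->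
  exists b, Defs.maxset A b /\ a <= b.
Proof.
move=> /finite_seqP [s ->] /= aA.
have [b [bs [ab bm]]] := exmax_seq aA.
by exists b; split.
Qed.

Lemma maxset_anti {d} {X : porderType d} (A : set X) : antichain (Defs.maxset A).
Proof.
move=> x y [Ax xm] [Ay ym] xy; apply/negP => /orP[le|le].
- by apply: xy; rewrite (xm y Ay le).
- by apply: xy; rewrite (ym x Ax le).
Qed.

Lemma nonempty_ex {T} {A : set T} : A <> set0 -> exists x, A x.
Proof. by move=> /eqP /set0P [x Ax]; exists x. Qed.

Theorem propositionD10 :
  (* well-defined and monotone on morphisms *)
  (forall (d1 d2 : Order.disp_t) (X : porderType d1) (Y : porderType d2)
          (f : X -> Y), {homo f : x y / x <= y} ->
     (forall S : set X, inM S -> inM (Mmax f S)) /\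
     (forall S T : set X, inM S -> inM T -> leM S T -> leM (Mmax f S) (Mmax f T))) /\
  (* preserves identities *)
  (forall (d : Order.disp_t) (X : porderType d) (S : set X),
     inM S -> Mmax (@id X) S = S) /\
  (* preserves composition *)
  (forall (d1 d2 d3 : Order.disp_t) (X : porderType d1) (Y : porderType d2)
          (Z : porderType d3) (f : X -> Y) (g : Y -> Z),
     {homo f : x y / x <= y} -> {homo g : x y / x <= y} ->
     forall S : set X, inM S -> Mmax (g \o f) S = Mmax g (Mmax f S)).
Proof.
split; [|split].
- move=> d1 d2 X Y f hf; split.
  + move=> S [ne [fin _]].
    have finI : finite_set (f @` S) by apply: finite_image.
    split; [|split].
    * have [x Sx] := nonempty_ex ne.
      have [b [bm _]] := exmax (a := f x) finI (ex_intro2 _ _ x Sx erefl).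
      move=> E; have : Mmax f S b := bm; by rewrite E.
    * by apply: sub_finite_set finI => y [].
    * exact: maxset_anti.
  + move=> S T _ [_ [finT _]] ST y [[x Sx <-] _].
    have [t [Tt xt]] := ST x Sx.
    have finI : finite_set (f @` T) by apply: finite_image.
    have [b [bm le]] := exmax (a := f t) finI (ex_intro2 _ _ t Tt erefl).
    by exists b; split=> //; apply: le_trans (hf _ _ xt) le.
- move=> d X S [_ [_ anti]]; apply/seteqP; split.
  + by move=> x [[y Sy <-] _].
  + move=> x Sx; split; first by exists x.
    move=> y [z Sz <-] xz.
    case: (pselect (x = z)) => [->//|nxz].
    by move: (anti x z Sx Sz nxz); rewrite /Order.comparable xz.
- move=> d1 d2 d3 X Y Z f g hf hg S [_ [fin _]].
  have finI : finite_set (f @` S) by apply: finite_image.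
  apply/seteqP; split.
  + move=> z [[x Sx <-] zm] /=.
    have [m [[mI mm] fm]] := exmax (a := f x) finI (ex_intro2 _ _ x Sx erefl).
    have gm : g m = g (f x).
      case: mI => x' Sx' fxm; rewrite -fxm in fm *.
      apply: zm; last exact: hg fm.
      by exists x'.
    split.
      by exists m => //; split.
    move=> y [m' [[x' Sx' <-] _] <-] le.
    by apply: zm; first by exists x'.
  + move=> z [[m [[x Sx fxm] mm] <-] zm].
    split; first by exists x => //=; rewrite fxm.
    move=> y [x' Sx' <-] /= le.
    have [m' [[mI' mm'] fm']] := exmax (a := f x') finI (ex_intro2 _ _ x' Sx' erefl).
    have e : g m' = g m.
      apply: zm; first by exists m' => //; split.
      by apply: le_trans le (hg _ _ fm').
    apply/eqP; rewrite eq_le le andbT -e; exact: hg.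
Qed.
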